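(* Let $N=2^n$ and let $\mathcal{P}(N,K)$ be a polar code of length $N$ and dimension $K$ with frozen set $\bar{\mathcal{A}}$ ($|\bar{\mathcal{A}}|=N-K$), frozen bits set to zero. Let $\mathbf{H}'$ be the pruned parity check matrix obtained from the standard polar factor graph parity check matrix by iterating the six pruning steps described in the context until none of them applies. Then $\mathbf{H}'$ has full row rank over GF(2).
   Context: Polar code: $\mathbf{G}_N=\mathbf{B}_N\mathbf{F}^{\otimes n}$ with $\mathbf{B}_N$ the bit-reversal permutation matrix and $\mathbf{F}=\begin{bmatrix}1&0\\1&1\end{bmatrix}$; an information word $\mathbf{u}\in\mathrm{GF}(2)^N$ has $\mathbf{u}_{\bar{\mathcal{A}}}=0$ and arbitrary $\mathbf{u}_{\mathcal{A}}$ ($|\mathcal{A}|=K$), and the codeword is $\mathbf{c}^T=\mathbf{u}^T\mathbf{G}_N$. Standard factor graph: there are $n+1$ layers of $N$ binary variable nodes $v^{(0)}=\mathbf{u},v^{(1)},\dots,v^{(n)}=\mathbf{c}$ and $n$ stages of parity-check nodes; at each stage $s$, the $N$ indices are paired into $N/2$ butterflies $(a,b)$, and each butterfly contributes two checks $v^{(s)}_a\oplus v^{(s)}_b\oplus v^{(s+1)}_a=0$ and $v^{(s)}_b\oplus v^{(s+1)}_b=0$, the pairing being such that these constraints are equivalent to $\mathbf{c}^T=\mathbf{u}^T\mathbf{G}_N$. This gives a parity check matrix of size $N\log_2N\times N(1+\log_2 N)$ over all variables (the last $N$ columns corresponding to codeword variables, called channel variable nodes (CVNs); the variables of $\mathbf{u}$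 in $\bar{\mathcal{A}}$ are frozen variable nodes (FVNs); all other variables are hidden variable nodes (HVNs)). Pruning steps: (1) remove all FVN columns (they equal zero); (2) a check node of degree 1 forces its neighbor to be 0: remove the check node and that variable; (3) a CVN connected via a degree-2 check node to an HVN: remove the check node and merge the HVN into the CVN; (4) an HVN of degree 1: remove it and its check node; (5) an HVN of degree 2: remove it and merge its two check nodes into one (sum of the rows); (6) a degree-2 check node connected to two HVNs: remove the check node and merge the two HVNs. The pruned matrix is the result of applying these steps repeatedly until no step applies; it is a parity check matrix (with hidden variables) whose codeword-variable projection is the polar code. *)

(* Defs.v *)
From HB Require Import structures.
From mathcomp Require Import all_boot all_order all_algebra.
Set Implicit Arguments. Unset Strict Implicit. Unset Printing Implicit Defensive.
Import GRing.Theory.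

(* Polar code of length N = 2^n.  Variables of the factor graph: layer    *)
(* s in {0..n} and index i in {0..N-1}.  v^(0) is the (bit-reversed)      *)
(* information word, v^(n) = c the codeword.                               *)

Definition pvar (n : nat) : finType := ('I_n.+1 * 'I_(2 ^ n))%type.

Definition bitrev (n i : nat) : nat :=
  \sum_(k < n) (odd (i %/ 2 ^ k)) * 2 ^ (n.-1 - k).

(* G_N = B_N F^{(x)n} = F^{(x)n} applied to w := u B_N, where
   w_i = u_{bitrev i}.  The butterfly graph below computes c = w F^{(x)n},
   so layer-0 position i carries u_{bitrev i}; it is frozen iff
   bitrev i is not in the information set A. *)
Definition frozen_pos (n : nat) (A : {set 'I_(2 ^ n)}) (i : 'I_(2 ^ n)) : bool :=
  ~~ [exists a in A, val a == bitrev n i].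

Definition is_cvn (n : nat) (v : pvar n) : bool := val v.1 == n.
Definition is_fvn (n : nat) (A : {set 'I_(2 ^ n)}) (v : pvar n) : bool :=
  (val v.1 == 0) && frozen_pos A v.2.
Definition is_hvn (n : nat) (A : {set 'I_(2 ^ n)}) (v : pvar n) : bool :=
  ~~ is_cvn v && ~~ is_fvn A v.

(* A check node is the set of variables it involves (GF(2) row support). *)
Notation check n := {set pvar n}.

(* Standard factor graph: at stage s < n, butterfly (a, b = a + 2^s) for
   each a with bit s equal to 0; checks
     v^(s)_a + v^(s)_b + v^(s+1)_a = 0   and   v^(s)_b + v^(s+1)_b = 0. *)
Definition butterfly_checks (n : nat) (s : 'I_n) (a : 'I_(2 ^ n)) : seq (check n) :=
  let s0 : 'I_n.+1 := inord s in
  let s1 : 'I_n.+1 := inord s.+1 in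
  let b : 'I_(2 ^ n) := insubd a (a + 2 ^ s) in
  [:: [set (s0, a); (s0, b); (s1, a)]; [set (s0, b); (s1, b)]].

Definition init_checks (n : nat) : seq (check n) :=
  flatten [seq butterfly_checks p.1 p.2
          | p <- enum [pred p : 'I_n * 'I_(2 ^ n) | ~~ odd (p.2 %/ 2 ^ p.1)]].

(* parity check matrix over GF(2): rows = checks, columns = all variables
   (variables that were removed give zero columns). *)
Definition pcm (n : nat) (cs : seq (check n)) : 'M['F_2]_(size cs, #|pvar n|) :=
  \matrix_(i < size cs, j < #|pvar n|)
     (((enum_val j \in nth set0 cs i) : nat)%:R)%R.

Definition rem_at (T : Type) (i : nat) (s : seq T) : seq T :=
  take i s ++ drop i.+1 s.

Definition toggle (n : nat) (c : pvar n) (S : check n) : check n :=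
  if c \in S then S :\ c else c |: S.

(* merge variable h into variable c (substitute h := c in every check) *)
Definition merge_into (n : nat) (h c : pvar n) (S : check n) : check n :=
  if h \in S then toggle c (S :\ h) else S.

Definition vdeg (n : nat) (v : pvar n) (cs : seq (check n)) : nat :=
  count (fun X : check n => v \in X) cs.

Definition symdiff (n : nat) (S T : check n) : check n := (S :\: T) :|: (T :\: S).

Inductive prune_step (n : nat) (A : {set 'I_(2 ^ n)}) :
    seq (check n) -> seq (check n) -> Prop :=
  (* (1) remove an FVN column *)
  | step1 cs v : is_fvn A v -> has (fun X : check n => v \in X) cs ->
      prune_step A cs [seq X :\ v | X <- cs]
  (* (2) degree-1 check forces its neighbour to 0 *)
  | step2 cs i v : i < size cs -> nth set0 cs i = [set v] ->
      prune_step A cs [seq X :\ v | X <- rem_at i cs]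
  (* (3) CVN -- degree-2 check -- HVN: merge the HVN into the CVN *)
  | step3 cs i c h : i < size cs -> is_cvn c -> is_hvn A h ->
      nth set0 cs i = [set c; h] ->
      prune_step A cs [seq merge_into h c X | X <- rem_at i cs]
  (* (4) HVN of degree 1: remove it and its check *)
  | step4 cs h : is_hvn A h -> vdeg h cs = 1 ->
      prune_step A cs [seq X : check n <- cs | h \notin X]
  (* (5) HVN of degree 2: remove it, replace its two checks by their sum *)
  | step5 cs h : is_hvn A h -> vdeg h cs = 2 ->
      let T := [seq X : check n <- cs | h \in X] in
      prune_step A cs
        (rcons [seq X : check n <- cs | h \notin X] (symdiff (nth set0 T 0) (nth set0 T 1)))
  (* (6) degree-2 check between two HVNs: remove it, merge the HVNs *)
  | step6 cs i h1 h2 : i < size cs -> is_hvn A h1 -> is_hvn A h2 -> h1 != h2 ->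
      nth set0 cs i = [set h1; h2] ->
      prune_step A cs [seq merge_into h2 h1 X | X <- rem_at i cs].

Inductive prune_reach (n : nat) (A : {set 'I_(2 ^ n)}) :
    seq (check n) -> seq (check n) -> Prop :=
  | reach_refl cs : prune_reach A cs cs
  | reach_step cs cs' cs'' : prune_step A cs cs' -> prune_reach A cs' cs'' ->
      prune_reach A cs cs''.

Definition pruned (n : nat) (A : {set 'I_(2 ^ n)}) (H' : seq (check n)) : Prop :=
  prune_reach A (init_checks n) H' /\ forall cs, ~ prune_step A H' cs.

(* Main.v *)
Require Import Defs.
From mathcomp Require Import all_boot all_order all_algebra.
Set Implicit Arguments. Unset Strict Implicit. Unset Printing Implicit Defensive.

Section Gen.
Variable n : nat.
Variable A : {set 'I_(2 ^ n)}.
Local Notation chk := (check n).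

Fixpoint par (ws : seq bool) (cs : seq chk) (v : pvar n) : bool :=
  match ws, cs with
  | b :: ws', X :: cs' => (b && (v \in X)) (+) par ws' cs' v
  | _, _ => false
  end.

Definition Indep (cs : seq chk) := forall ws, size ws = size cs ->
  (forall v, ~~ is_fvn A v -> ~~ par ws cs v) -> ~~ has id ws.

Lemma par_map_eq (f : chk -> chk) ws cs (u a : pvar n) : (forall X, (u \in f X) = (a \in X)) ->
  par ws (map f cs) u = par ws cs a.
Proof. by move=> H; elim: ws cs => [|w ws IH] [|X cs] //=; rewrite IH H. Qed.

Lemma par_map_xor (f : chk -> chk) ws cs (u a b : pvar n) : (forall X, (u \in f X) = (a \in X) (+) (b \in X)) ->
  par ws (map f cs) u = par ws cs a (+) par ws cs b.
Proof.
move=> H; elim: ws cs => [|w ws IH] [|X cs] //=; rewrite IH H.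
by case: w; case: (a \in X); case: (b \in X); case: (par ws cs a); case: (par ws cs b).
Qed.

Lemma par_nohas ws cs u : ~~ has id ws -> par ws cs u = false.
Proof. by elim: ws cs => [|w ws IH] [|X cs] //=; case: w => //= /IH ->. Qed.

Definition ins (i : nat) (c : bool) (ws : seq bool) := take i ws ++ c :: drop i ws.

Lemma size_ins i c ws : size (ins i c ws) = (size ws).+1.
Proof.
by rewrite /ins size_cat /= addnS -size_cat cat_take_drop.
Qed.

Lemma has_ins i c ws : has id (ins i c ws) = c || has id ws.
Proof.
by rewrite /ins has_cat /= -{3}(cat_take_drop i ws) has_cat orbCA.
Qed.

Lemma size_rem_at (T : Type) i (s : seq T) : i < size s -> size (rem_at i s) = (size s).-1.
Proof.
move=> H; rewrite /rem_at size_cat size_take size_drop H.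
by case: (size s) H => // m Hm /=; rewrite subSS subnKC.
Qed.

Lemma par_ins cs ws i c u : i < size cs -> size ws = (size cs).-1 ->
  par (ins i c ws) cs u = par ws (rem_at i cs) u (+) (c && (u \in nth set0 cs i)).
Proof.
elim: cs ws i => [|X cs IH] ws [|i] //= Hi Hs.
  by rewrite /ins take0 drop0 /rem_at /= drop0 [in RHS]addbC.
case: ws Hs => [|w ws] /=; first by case: (cs) Hi.
case=> Hs.
rewrite /ins /= -/(ins i c ws) IH //.
  by rewrite /rem_at /= addbA.
by rewrite -Hs.
Qed.

Fixpoint inter (P : pred chk) (cs : seq chk) (ws1 ws2 : seq bool) : seq bool :=
  match cs with
  | [::] => [::]
  | X :: cs' => if P X then head false ws1 :: inter P cs' (behead ws1) ws2
                else head false ws2 :: inter P cs' ws1 (behead ws2)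
  end.

Lemma size_inter P cs ws1 ws2 : size (inter P cs ws1 ws2) = size cs.
Proof. by elim: cs ws1 ws2 => //= X cs IH ws1 ws2; case: (P X) => /=; rewrite IH. Qed.

Lemma inter_prop P cs ws1 ws2 u :
  size ws1 = count P cs -> size ws2 = count (predC P) cs ->
  par (inter P cs ws1 ws2) cs u =
    par ws1 (filter P cs) u (+) par ws2 (filter (predC P) cs) u /\
  has id (inter P cs ws1 ws2) = has id ws1 || has id ws2.
Proof.
elim: cs ws1 ws2 => [|X cs IH] ws1 ws2 /=.
  by case: ws1 => // _; case: ws2.
case: (P X) => /=.
  case: ws1 => [|w ws1] //= [H1] H2.
  have [-> ->] := IH ws1 ws2 H1 H2.
  by split; [rewrite addbA | rewrite orbA].
case: ws2 => [|w ws2] //= H1 [H2].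
have [-> ->] := IH ws1 ws2 H1 H2.
split; first by rewrite addbCA.
by rewrite orbCA.
Qed.

Lemma par_rcons ws cs b X u : size ws = size cs ->
  par (rcons ws b) (rcons cs X) u = par ws cs u (+) (b && (u \in X)).
Proof.
elim: ws cs => [|w ws IH] [|Y cs] //=; first by rewrite addbF.
by case=> H; rewrite IH // addbA.
Qed.


Lemma mem_merge_c (h c : pvar n) X : c != h ->
  (c \in merge_into h c X) = (c \in X) (+) (h \in X).
Proof.
move=> ch; rewrite /merge_into; case: (h \in X); last by rewrite addbF.
rewrite /toggle in_setD1 ch /=; case: ifP => Hc.
  by rewrite !inE eqxx.
by rewrite !inE eqxx Hc.
Qed.

Lemma mem_merge_o (h c u : pvar n) X : u != c -> u != h ->
  (u \in merge_into h c X) = (u \in X).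
Proof.
move=> uc uh; rewrite /merge_into; case: (h \in X) => //.
by rewrite /toggle; case: ifP => _; rewrite !inE (negbTE uc) (negbTE uh).
Qed.

Lemma indep36 cs i (c h : pvar n) : i < size cs -> c != h ->
  ~~ is_fvn A c -> ~~ is_fvn A h -> nth set0 cs i = [set c; h] ->
  Indep cs -> Indep [seq merge_into h c X | X <- rem_at i cs].
Proof.
move=> Hi ch fc fh Hn HI ws' Hs Hp.
rewrite size_map size_rem_at // in Hs.
set d := par ws' (rem_at i cs) h.
have := HI (ins i d ws'); rewrite has_ins negb_or => /(_ _ _) /andP[] //.
  by rewrite size_ins Hs prednK // (leq_ltn_trans _ Hi).
move=> u fu; rewrite par_ins // Hn !inE.
have [->|uc] := eqP.
  rewrite orTb andbT -(par_map_xor ws' (rem_at i cs) (u:=c) (a:=c) (b:=h) (f := merge_into h c)).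
    exact: Hp.
  by move=> X; rewrite mem_merge_c.
have [->|uh] := eqP; first by rewrite andbT addbb.
rewrite andbF addbF -(par_map_eq ws' (rem_at i cs) (u:=u) (a:=u) (f := merge_into h c)).
  exact: Hp.
by move=> X; rewrite mem_merge_o //; apply/eqP.
Qed.

Lemma step_indep cs cs' : 0 < n -> prune_step A cs cs' -> Indep cs -> Indep cs'.
Proof.
move=> n0; case=> {cs cs'}.
- move=> cs v fv _ HI ws Hs Hp; rewrite size_map in Hs; apply: HI => // u fu.
  rewrite -(par_map_eq ws cs (u:=u) (a:=u) (f := fun X => X :\ v)); first exact: Hp.
  by move=> X; rewrite in_setD1; case: eqP => // E; rewrite E fv in fu.
- move=> cs i v Hi Hn HI ws' Hs Hp.
  rewrite size_map size_rem_at // in Hs.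
  set d := par ws' (rem_at i cs) v.
  have := HI (ins i d ws'); rewrite has_ins negb_or => /(_ _ _) /andP[] //.
    by rewrite size_ins Hs prednK // (leq_ltn_trans _ Hi).
  move=> u fu; rewrite par_ins // Hn !inE.
  have [->|uv] := eqP; first by rewrite andbT addbb.
  rewrite andbF addbF -(par_map_eq ws' (rem_at i cs) (u:=u) (a:=u) (f := fun X => X :\ v)).
    exact: Hp.
  by move=> X; rewrite in_setD1; move/eqP: uv => /negbTE ->.
- move=> cs i c h Hi Hc Hh Hn; apply: indep36 => //.
  + by apply/eqP => E; move: Hh; rewrite /is_hvn -E Hc.
  + by rewrite /is_fvn (eqP Hc) (gtn_eqF n0).
  + by case/andP: Hh.
- move=> cs h Hh Hd HI ws' Hs Hp; rewrite size_filter in Hs.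
  set P := (fun X : check n => h \notin X).
  have [Hpar Hhas] := inter_prop h Hs (size_nseq (count (predC P) cs) false).
  have := HI (inter P cs ws' (nseq (count (predC P) cs) false)).
  rewrite size_inter Hhas has_nseq andbF orbF; apply=> // u fu.
  have [-> _] := inter_prop u Hs (size_nseq (count (predC P) cs) false).
  rewrite (@par_nohas (nseq _ false)) ?has_nseq ?andbF // addbF; exact: Hp.
- move=> cs h Hh Hd T HI ws' Hs Hp.
  set P := (fun X : check n => h \notin X).
  have HT : filter (predC P) cs = T.
    by apply: eq_filter => X /=; rewrite /P negbK.
  have ST : size T = 2 by rewrite /T size_filter.
  rewrite size_rcons size_filter in Hs.
  case/lastP: ws' Hs Hp => [|ws0 b] //; rewrite size_rcons => -[Hs] Hp.
  have H2 : size [:: b; b] = count (predC P) cs by rewrite -size_filter HT ST.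
  have := HI (inter P cs ws0 [:: b; b]).
  have [_ ->] := inter_prop h Hs H2.
  rewrite has_rcons /= orbF orbC orbb; apply; first by rewrite size_inter.
  move=> u fu; have [-> _] := inter_prop u Hs H2.
  move: (Hp u fu); rewrite par_rcons; last by rewrite size_filter.
  rewrite HT; clearbody T; case: T ST {HT Hp} => [|T0 [|T1 []]] //= _.
  rewrite /symdiff !inE.
  by clear H2; case: b; case: (u \in T0); case: (u \in T1); case: (par ws0 _ u).
- move=> cs i h1 h2 Hi H1 H2 Hne Hn; apply: indep36 => //.
  + by case/andP: H1.
  + by case/andP: H2.
Qed.

Lemma step_nil cs cs' : prune_step A cs cs' -> cs = [::] -> cs' = [::].
Proof.
case=> [cs0 v _ Hh ->|cs0 i v Hi _ ->|cs0 i c h Hi _ _ _ ->|cs0 h _ Hd ->|cs0 h _ Hd T E|cs0 i h1 h2 Hi _ _ _ _ ->] //.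
by rewrite E in Hd.
Qed.

End Gen.

Section Bridge.
Import GRing.Theory.
Local Open Scope ring_scope.
Variable n : nat.
Variable A : {set 'I_(2 ^ n)}.

Lemma par_sum ws (cs : seq (check n)) v : size ws = size cs ->
  par ws cs v = odd (\sum_(i < size cs) (nth false ws i && (v \in nth set0 cs i))).
Proof.
elim: cs ws => [|X cs IH] [|w ws] //=; first by rewrite big_ord0.
case=> Hs; rewrite big_ord_recl /= oddD IH //.
by case: (w && _).
Qed.

Lemma par_sum' m ws (cs : seq (check n)) v : size ws = size cs -> size cs = m ->
  par ws cs v = odd (\sum_(i < m) (nth false ws i && (v \in nth set0 cs i))).
Proof. by move=> H1 H2; rewrite par_sum // -H2. Qed.

Lemma F2_cases (a : 'F_2) : a = ((a != 0) : nat)%:R.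
Proof. by case: a => [[|[|m]] Hm] //; apply/val_inj. Qed.

Lemma indep_row_free (cs : seq (check n)) : Indep A cs -> row_free (pcm cs).
Proof.
move=> HI; rewrite -kermx_eq0; apply/eqP/row_matrixP => i; rewrite row0.
set x := row i (kermx (pcm cs)).
have Hx : x *m pcm cs = 0 by rewrite /x -row_mul mulmx_ker row0.
clearbody x.
set ws := [seq x 0 j != 0 | j <- enum 'I_(size cs)].
have Hsz : size ws = size cs by rewrite size_map size_enum_ord.
have Hnth : forall j : 'I_(size cs), nth false ws j = (x 0 j != 0).
  by move=> j; rewrite (nth_map j) ?size_enum_ord // nth_ord_enum.
have := HI ws Hsz.
have Hpar : forall v, ~~ par ws cs v.
  move=> v; rewrite par_sum //.
  have := congr1 (fun M : 'M['F_2]_(1, #|pvar n|) => M 0 (enum_rank v)) Hx.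
  rewrite !mxE.
  under eq_bigr => j _ do rewrite /pcm mxE enum_rankK [x 0 j]F2_cases -natrM -Hnth.
  rewrite -natr_sum -Fp_nat_mod //=.
have -> : (\sum_(i0 < size cs) (nth false ws i0 && (v \in nth set0 cs i0)) =
           \sum_(i0 < size cs) (nth false ws i0 * (v \in nth set0 cs i0)))%N.
    by apply: eq_bigr => j _; rewrite -mulnb.
  rewrite modn2.
  by case: (odd _) => //= /eqP; rewrite oner_eq0.
move=> /(_ (fun v _ => Hpar v)) Hh.
apply/rowP => j; rewrite mxE; apply/eqP; apply: contraNT Hh => Hj.
by apply/hasP; exists true => //; rewrite -Hj -Hnth mem_nth // Hsz.
Qed.
End Bridge.

Section Pivot.
Variable n : nat.
Variable A : {set 'I_(2 ^ n)}.

Lemma pivot_indep (T : eqType) (tags : seq T) (chkf : T -> check n)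
  (p : T -> pvar n) (r : T -> nat) :
  uniq tags -> {in tags, forall t, p t \in chkf t} ->
  {in tags, forall t, ~~ is_fvn A (p t)} ->
  {in tags &, forall t1 t2, t1 != t2 -> p t1 \in chkf t2 -> r t1 < r t2} ->
  Indep A (map chkf tags).
Proof.
move=> Hu Hin Hf Hlt ws; rewrite size_map => Hs Hp.
apply/negP => /(has_nthP false) [i0 Hi0 Hw0].
have t0 : T by move: Hi0; rewrite Hs; case: (tags) => [|t ?] //.
rewrite Hs in Hi0.
pose P (i : 'I_(size tags)) := nth false ws i.
have Pi0 : P (Ordinal Hi0) by [].
case: (arg_maxnP (fun i : 'I_(size tags) => r (nth t0 tags i)) Pi0) => im Pim Hmax.
have Hm : im < size tags by [].
set tm := nth t0 tags im.
have tmin : tm \in tags by rewrite mem_nth.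
move: (Hp (p tm) (Hf _ tmin)); rewrite (par_sum' (m := size tags)) ?size_map //.
rewrite (bigD1 im) //= (nth_map t0) //.
have -> : nth false ws im by exact: Pim.
rewrite -/tm (Hin _ tmin) /=.
rewrite big1 ?addn0 //.
move=> j Hj; apply/eqP; rewrite eqb0 negb_and; apply/orP.
case Pj : (nth false ws j); [right | by left].
rewrite (nth_map t0) //; apply/negP.
have tjin : nth t0 tags j \in tags by rewrite mem_nth.
have Hne : tm != nth t0 tags j.
  by rewrite nth_uniq // eq_sym.
move=> /(Hlt _ _ tmin tjin Hne); rewrite ltnNge.
by move: (Hmax j Pj) => /= ->.
Qed.

End Pivot.

From mathcomp Require Import zify.

Lemma bplus (n s a : nat) : s < n -> ~~ odd (a %/ 2^s) -> a < 2^n -> a + 2^s < 2^n.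
Proof.
move=> sn ev an.
have Q0 : 0 < 2^s := expn_gt0 2 s.
have E : 2^n = 2 * 2^(n - s).-1 * 2^s.
  by rewrite -expnS prednK ?subn_gt0 // -expnD subnK // ltnW.
have Ea := divn_eq a (2^s).
have Hr := ltn_pmod a Q0.
have Hq := odd_double_half (a %/ 2^s).
move: ev Ea Hr Hq an; rewrite E.
set q := a %/ 2^s; set r := a %% 2^s; set M := 2^(n - s).-1; set Q := 2^s.
move=> /negbTE -> Ea Hr /= Hq an.
rewrite add0n -muln2 in Hq.
have Q0' : 0 < Q by rewrite /Q expn_gt0.
clearbody q r M Q.
move: Hq; set m := q./2 => Hq; clearbody m.
have HmM : m < M.
  rewrite ltnNge; apply/negP => HM.
  have : 2 * M * Q <= q * Q by rewrite -Hq (mulnC m 2) leq_mul2r leq_mul2l HM !orbT.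
  lia.
have e1 : m.+1 * 2 * Q = q * Q + 2 * Q by rewrite -Hq -!mulnDl mulSn addnC.
have : m.+1 * 2 * Q <= 2 * M * Q by rewrite (mulnC _ 2) leq_mul2r leq_mul2l HmM !orbT.
lia.
Qed.

Lemma odd_shift s a : odd ((a + 2^s) %/ 2^s) = ~~ odd (a %/ 2^s).
Proof. by rewrite divnDr ?dvdnn // divnn expn_gt0 /= addn1 oddS. Qed.

Section Init.
Variable n : nat.
Variable A : {set 'I_(2 ^ n)}.

Definition Ttag := (('I_n * 'I_(2 ^ n)) * nat)%type.

Definition tags : seq Ttag :=
  [seq (p, k) | p <- enum [pred p : 'I_n * 'I_(2 ^ n) | ~~ odd (p.2 %/ 2 ^ p.1)],
                k <- [:: 0; 1]].

Definition chkt (t : Ttag) : check n := nth set0 (butterfly_checks t.1.1 t.1.2) t.2.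

Definition pv (t : Ttag) : pvar n :=
  (inord (t.1.1).+1, if t.2 == 0 then t.1.2 else insubd t.1.2 (t.1.2 + 2 ^ t.1.1)).

Lemma init_eq : init_checks n = map chkt tags.
Proof.
rewrite /init_checks /tags map_flatten -map_comp; congr flatten.

Qed.

Lemma tags_mem t : t \in tags -> ~~ odd (t.1.2 %/ 2 ^ t.1.1) /\ ((t.2 == 0) || (t.2 == 1)).
Proof.
case/allpairsP => -[p k] /= [Hp Hk ->] /=; split; last by rewrite !inE in Hk.
by rewrite mem_enum in Hp.
Qed.

Lemma val_b (s : 'I_n) (a : 'I_(2 ^ n)) : ~~ odd (a %/ 2 ^ s) ->
  val (insubd a (a + 2 ^ s) : 'I_(2 ^ n)) = a + 2 ^ s.
Proof. by move=> ev; rewrite val_insubd bplus. Qed.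

Lemma pv_in t : t \in tags -> pv t \in chkt t.
Proof.
case: t => [[s a] k] /tags_mem [_] /= /orP[] /eqP ->;
  by rewrite /chkt /pv /butterfly_checks /= !inE eqxx ?orbT.
Qed.

Lemma pv_nfvn t : t \in tags -> ~~ is_fvn A (pv t).
Proof.
case: t => [[s a] k] _; rewrite /is_fvn /pv /= inordK //.
by rewrite ltnS.
Qed.

Lemma mem_chkt t v : t \in tags -> v \in chkt t -> v.1 = inord t.1.1 \/ v = pv t.
Proof.
case: t => [[s a] k] /tags_mem [_] /= /orP[] /eqP ->;
  rewrite /chkt /pv /butterfly_checks /= !inE.
  by case/orP => [/orP[]|] /eqP ->; [left | left | right].
by case/orP => /eqP ->; [left | right].
Qed.

Lemma pv_inj t1 t2 : t1 \in tags -> t2 \in tags -> pv t1 = pv t2 -> t1 = t2.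
Proof.
case: t1 => [[s1 a1] k1]; case: t2 => [[s2 a2] k2].
move=> /tags_mem [/= e1 /orP[] /eqP -> ] /tags_mem [/= e2 /orP[] /eqP ->];
  rewrite /pv /= => -[Es Ea];
  (have es : s1 = s2 by apply/val_inj; move: (congr1 (@nat_of_ord _) Es); rewrite !inordK ?ltnS // => -[]);
  subst s2.
- by rewrite Ea.
- move: (congr1 val Ea); rewrite val_b // => Ea'.
  by move: e1; rewrite Ea' odd_shift e2.
- move: (congr1 val Ea); rewrite val_b // => Ea'.
  by move: e2; rewrite -Ea' odd_shift e1.
- move: (congr1 val Ea); rewrite !val_b // => /addIn Ea'.
  by have -> : a1 = a2 by apply/val_inj.
Qed.

Lemma init_indep : Indep A (init_checks n).
Proof.
rewrite init_eq; apply: (@pivot_indep n A _ tags chkt pv (fun t => val t.1.1)).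
- apply: allpairs_uniq; [exact: enum_uniq | by [] | by move=> [? ?] [? ?]].
- exact: pv_in.
- exact: pv_nfvn.
- move=> t1 t2 H1 H2 Hne /(mem_chkt H2) [].
    case: t1 t2 H1 H2 {Hne} => [[s1 a1] k1] [[s2 a2] k2] _ _ /= /(congr1 (@nat_of_ord _)).
    by rewrite !inordK ?ltnS ?(ltnW (ltn_ord _)) // => ->.
  by move/(pv_inj H1 H2) => E; rewrite E eqxx in Hne.
Qed.

End Init.

Lemma reach_indep n (A : {set 'I_(2 ^ n)}) cs cs' : 0 < n ->
  prune_reach A cs cs' -> Indep A cs -> Indep A cs'.
Proof.
move=> n0; elim=> // c1 c2 c3 Hs _ IH H; apply: IH; exact: step_indep Hs H.
Qed.

Lemma reach_nil n (A : {set 'I_(2 ^ n)}) cs cs' :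
  prune_reach A cs cs' -> cs = [::] -> cs' = [::].
Proof.
elim=> // c1 c2 c3 Hs _ IH E; apply: IH; exact: step_nil Hs E.
Qed.

Theorem proposition1 (n : nat) (A : {set 'I_(2 ^ n)}) (H' : seq {set pvar n}) :
  pruned A H' -> row_free (pcm H').
Proof.
case=> Hr _; apply: (@indep_row_free n A).
case: (posnP n) => [n0|n0]; last first.
  exact: (@reach_indep _ _ _ _ n0 Hr (@init_indep _ A)).
have E : init_checks n = [::].
  rewrite init_eq /tags.
  case: (enum _) (fun p => ltn_ord (p : 'I_n * 'I_(2 ^ n)).1) => [|p ?] // H.
  by move: (leq_trans (H p) (eq_leq n0)).
rewrite (reach_nil Hr E) => ws /=; case: ws => //.
Qed.
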